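(* Let $M$ be a finite abelian group of order $m$, $J$ a Jacobi function on $M$, $c\in\hat{M}$ with $c^2=1$, and $i\colon\hat{M}\setminus\{c\}\to\hat{M}\setminus\{1\}$ a bijection with $i(x)=x\,i(x^{-1})$ for all $x\ne c$, such that $J(\alpha,\beta)=\frac{1}{m}\sum_{x\in\hat{M}\setminus\{c\}}\alpha(i(x))\beta(i(x)x^{-1})$ for all $\alpha,\beta\in M$. Let $F=\hat{M}\sqcup\{0\}$ with the operation $\oplus$ for which $0$ is the identity and, for $x,y\ne0$, $x\oplus y=0$ if $x=cy$ and $x\oplus y=x\,i(x/y)^{-1}$ otherwise. Then $\oplus$ is associative on $F$.
   Context: $\hat{M}$ is the Pontryagin dual of $M$, written multiplicatively with identity $1$; for $\alpha\in M$, $x\in\hat{M}$, $\alpha(x)$ is the value of the character $x$ at $\alpha$. $\delta(\alpha)=1$ if $\alpha$ is the identity of $M$ and $0$ otherwise. A Jacobi function on $M$ is a function $J\colon M\times M\to\mathbf{C}$ satisfying: (A) $J(\alpha,\beta)=J(\beta,\alpha)$; (B) with $J^*(\alpha,\beta)=-\delta(\alpha)-\delta(\beta)+J(\alpha,\beta)$, $J^*(\alpha,\beta)J^*(\alpha\beta,\gamma)=J^*(\alpha,\beta\gamma)J^*(\beta,\gamma)$; (C) $\sum_{\beta\in M}J(\alpha_1\beta,\alpha_2\beta^{-1})J(\alpha_3\beta,\alpha_4\beta^{-1})=J(\alpha_1\alpha_4,\alpha_2\alpha_3)$; all for all elements of $M$. *)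

(* Defs.v *)
From HB Require Import structures.
From mathcomp Require Import all_boot all_order all_algebra all_fingroup all_solvable all_field.
Set Implicit Arguments. Unset Strict Implicit. Unset Printing Implicit Defensive.
Import Order.TTheory GRing.Theory Num.Theory.
Local Open Scope ring_scope.

(* Values are taken in algC (character values of a finite group are roots
   of unity, hence algebraic). *)
Definition char_axiom (gT : finGroupType) (f : {ffun gT -> algC}) : bool :=
  (f 1%g == 1) && [forall a : gT, [forall b : gT, f (a * b)%g == f a * f b]].

Record dual (gT : finGroupType) := Dual {
  dfun :> {ffun gT -> algC};
  _ : char_axiom dfun }.

HB.instance Definition _ (gT : finGroupType) := [isSub for @dfun gT].
HB.instance Definition _ (gT : finGroupType) := [Equality of dual gT by <:].
HB.instance Definition _ (gT : finGroupType) := [Choice of dual gT by <:].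
HB.instance Definition _ (gT : finGroupType) := [Countable of dual gT by <:].

(* Finiteness of the dual: every character takes values in the #|gT|-th
   roots of unity, which are powers of a fixed primitive root. *)
Section DualFinite.
Variable gT : finGroupType.

Lemma dual_card_gt0 : (0 < #|gT|)%N.
Proof. by rewrite -cardsT (cardG_gt0 [set: gT]). Qed.

Definition dual_z : algC := sval (C_prim_root_exists dual_card_gt0).
Lemma dual_zP : #|gT|.-primitive_root dual_z.
Proof. exact: svalP (C_prim_root_exists dual_card_gt0). Qed.

Lemma dual_pow (x : dual gT) (a : gT) : x a ^+ #|gT| = 1.
Proof.
case: x => f /= /andP[/eqP f1 /forallP fM].
have fX k : f (a ^+ k)%g = f a ^+ k.
  elim: k => [|k IH]; first by rewrite expg0 expr0.
  by rewrite expgS exprS (eqP (forallP (fM a) _)) IH.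
by rewrite -fX -cardsT expg_cardG ?inE.
Qed.

Definition dual_encode (x : dual gT) : {ffun gT -> 'I_#|gT|} :=
  [ffun a => sval (prim_rootP dual_zP (dual_pow x a))].
Definition dual_decode (g : {ffun gT -> 'I_#|gT|}) : option (dual gT) :=
  insub [ffun a => dual_z ^+ g a].

Lemma dual_encodeK : pcancel dual_encode dual_decode.
Proof.
move=> x; rewrite /dual_decode.
suff -> : [ffun a => dual_z ^+ dual_encode x a] = val x by rewrite valK.
apply/ffunP => a; rewrite !ffunE.
by case: prim_rootP => i /= ->.
Qed.

HB.instance Definition _ := isFinite.Build (dual gT) (pcan_enumP dual_encodeK).
End DualFinite.

Section DualOps.
Variable gT : finGroupType.
Implicit Types x y : dual gT.

Lemma dual1 x : x 1%g = 1.
Proof. by case: x => f /= /andP[/eqP]. Qed.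

Lemma dualM x (a b : gT) : x (a * b)%g = x a * x b.
Proof. by case: x => f /= /andP[_ /forallP /(_ a) /forallP /(_ b) /eqP]. Qed.

Lemma dual_one_ax : char_axiom [ffun _ : gT => (1 : algC)].
Proof. by apply/andP; split; [rewrite ffunE | apply/forallP=> a; apply/forallP=> b; rewrite !ffunE mulr1]. Qed.

Definition dual_one : dual gT := Dual dual_one_ax.

Lemma dual_mul_ax x y : char_axiom [ffun a => x a * y a].
Proof.
apply/andP; split; first by rewrite ffunE !dual1 mulr1.
by apply/forallP=> a; apply/forallP=> b; rewrite !ffunE !dualM mulrACA.
Qed.

Definition dmul x y : dual gT := Dual (dual_mul_ax x y).

Lemma dual_inv_ax x : char_axiom [ffun a => (x a)^-1].
Proof.
apply/andP; split; first by rewrite ffunE dual1 invr1.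
by apply/forallP=> a; apply/forallP=> b; rewrite !ffunE dualM invfM.
Qed.

Definition dinv x : dual gT := Dual (dual_inv_ax x).

Definition kdelta (a : gT) : algC := (a == 1%g)%:R.

End DualOps.

Definition Jstar (gT : finGroupType) (J : gT -> gT -> algC) (a b : gT) : algC :=
  - kdelta a - kdelta b + J a b.

Definition jacobi_function (gT : finGroupType) (J : gT -> gT -> algC) : Prop :=
  [/\ (forall a b, J a b = J b a),
      (forall a b g, Jstar J a b * Jstar J (a * b)%g g = Jstar J a (b * g)%g * Jstar J b g)
    & (forall a1 a2 a3 a4,
        \sum_(b : gT) J (a1 * b)%g (a2 * b^-1)%g * J (a3 * b)%g (a4 * b^-1)%g
        = J (a1 * a4)%g (a2 * a3)%g)].

(* F = \hat M ⊔ {0}, with 0 encoded as None. *)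
Definition oplus (gT : finGroupType) (c : dual gT) (i : dual gT -> dual gT)
    (u v : option (dual gT)) : option (dual gT) :=
  match u, v with
  | None, _ => v
  | _, None => u
  | Some x, Some y =>
      if x == dmul c y then None
      else Some (dmul x (dinv (i (dmul x (dinv y)))))
  end.

(* Main.v *)
Require Import Defs.
From HB Require Import structures.
From mathcomp Require Import all_boot all_order all_algebra all_fingroup all_solvable all_field.
Import GRing.Theory Num.Theory.
Local Open Scope ring_scope.

From mathcomp Require Import ring.
Set Implicit Arguments. Unset Strict Implicit. Unset Printing Implicit Defensive.

Lemma dmulE (gT : finGroupType) (x y : dual gT) a : dmul x y a = x a * y a.
Proof. by rewrite /dmul /= ffunE. Qed.
Lemma dinvE (gT : finGroupType) (x : dual gT) a : dinv x a = (x a)^-1.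
Proof. by rewrite /dinv /= ffunE. Qed.
Lemma doneE (gT : finGroupType) a : dual_one gT a = 1.
Proof. by rewrite /dual_one /= ffunE. Qed.
Lemma dual_eqP (gT : finGroupType) (x y : dual gT) : (forall a, x a = y a) -> x = y.
Proof. by move=> H; apply: val_inj; apply/ffunP. Qed.
Lemma dual_neq0 (gT : finGroupType) (x : dual gT) a : x a != 0.
Proof.
apply/eqP => H; have := dualM x a a^-1; rewrite mulgV dual1 H mul0r.
by move/eqP; rewrite oner_eq0.
Qed.

Lemma dual_sum (gT : finGroupType) (x : dual gT) :
  \sum_(a : gT) x a = (x == dual_one gT)%:R * #|gT|%:R.
Proof.
have [->|ne] := eqVneq x (dual_one gT).
  by rewrite mul1r (eq_bigr (fun _ => 1)) ?sumr_const ?card_ord // => a _; rewrite doneE.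
rewrite mul0r.
have [b xb] : exists b, x b != 1.
  apply/existsP; rewrite -negb_forall; apply: contra ne => /forallP H.
  by apply/eqP/dual_eqP => a; rewrite doneE; apply/eqP/H.
have : \sum_a x a = x b * \sum_a x a.
  rewrite big_distrr /= (reindex_inj (mulgI b)) /=.
  by apply: eq_bigr => a _; rewrite dualM.
move/eqP; rewrite -subr_eq0 -{1}(mul1r (\sum_a x a)) -mulrBl mulf_eq0 subr_eq0.
by rewrite eq_sym (negbTE xb) => /eqP.
Qed.

Lemma dmul_inv_eq1 (gT : finGroupType) (x y : dual gT) :
  (dmul x (dinv y) == dual_one gT) = (x == y).
Proof.
apply/eqP/eqP => [H|->].
  apply/dual_eqP => a; have := f_equal (fun f : dual gT => f a) H.
  rewrite dmulE dinvE doneE => /(congr1 (fun t => t * y a)).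
  by rewrite mul1r -mulrA mulVf ?mulr1 ?dual_neq0.
by apply/dual_eqP => a; rewrite dmulE dinvE doneE mulfV ?dual_neq0.
Qed.

Lemma orth (gT : finGroupType) (x y : dual gT) :
  \sum_(a : gT) x a * (y a)^-1 = (x == y)%:R * #|gT|%:R.
Proof.
rewrite (eq_bigr (fun a => dmul x (dinv y) a)); last by move=> a _; rewrite dmulE dinvE.
by rewrite dual_sum dmul_inv_eq1.
Qed.

Ltac dext := apply/dual_eqP => ?; rewrite ?(dmulE, dinvE, doneE).

Lemma dapp (gT : finGroupType) (x y : dual gT) a : x = y -> x a = y a.
Proof. by move->. Qed.

Lemma dmulI (gT : finGroupType) (s x y : dual gT) : (dmul s x == dmul s y) = (x == y).
Proof.
apply/eqP/eqP => [H|->] //; apply/dual_eqP => a.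
move: (dapp a H); rewrite !dmulE => /(congr1 (fun t => (s a)^-1 * t)).
by rewrite !mulrA mulVf ?dual_neq0 ?mul1r.
Qed.

Lemma oplus_scale (gT : finGroupType) (c : dual gT) i (s x y : dual gT) :
  oplus c i (Some (dmul s x)) (Some (dmul s y)) = omap (dmul s) (oplus c i (Some x) (Some y)).
Proof.
rewrite /oplus.
have -> : dmul c (dmul s y) = dmul s (dmul c y) by dext; ring.
rewrite dmulI; case: ifP => //= _.
have -> : dmul (dmul s x) (dinv (dmul s y)) = dmul x (dinv y).
  by dext; field; rewrite ?dual_neq0.
congr Some; dext; ring.
Qed.

Lemma oplus_comm (gT : finGroupType) (c : dual gT) i
  (Hc : dmul c c = dual_one gT)
  (Hi : forall x, x != c -> i x = dmul x (i (dinv x))) x y :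
  oplus c i (Some x) (Some y) = oplus c i (Some y) (Some x).
Proof.
have cc a : c a * c a = 1 by rewrite -dmulE Hc doneE.
rewrite /oplus.
have -> : (x == dmul c y) = (y == dmul c x).
  apply/eqP/eqP => ->; dext; by rewrite mulrA cc mul1r.
case: ifP => // /negbT hne; congr Some.
set w := dmul y (dinv x).
have wc : w != c.
  apply: contra hne => /eqP hw; apply/eqP; apply/dual_eqP => a.
  move: (dapp a hw); rewrite /w !dmulE dinvE => <-.
  by rewrite divfK ?dual_neq0.
have e : dinv w = dmul x (dinv y) by dext; field; rewrite ?dual_neq0.
rewrite (Hi w wc) e; dext; field; rewrite ?dual_neq0 //.
Qed.

Lemma pt (gT : finGroupType) (c : dual gT) i (x a b s : dual gT) : x != c ->
  ((dmul (i x) s == a) && (dmul (dmul (i x) (dinv x)) s == b)) =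
  (x == dmul a (dinv b)) && (oplus c i (Some a) (Some b) == Some s).
Proof.
move=> xc; rewrite /oplus.
apply/andP/andP => [[/eqP ea /eqP eb]|[/eqP ex]].
  have ex : x = dmul a (dinv b).
    by rewrite -ea -eb; dext; field; rewrite ?dual_neq0.
  have -> : (a == dmul c b) = false.
    apply/negbTE; apply: contra xc => /eqP eab; apply/eqP; rewrite ex eab.
    by dext; field; rewrite ?dual_neq0.
  split; first by apply/eqP.
  rewrite -ex -ea; apply/eqP; congr Some; dext; field; rewrite ?dual_neq0 //.
case: ifP => // _ /eqP [] <-; rewrite -ex; split; apply/eqP; apply/dual_eqP => t;
  rewrite ?(dmulE, dinvE).
  by field; rewrite ?dual_neq0.
move: (dapp t ex); rewrite ?(dmulE, dinvE) => ->; field; rewrite ?dual_neq0 //.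
Qed.

Lemma Ucount (gT : finGroupType) (c : dual gT) i (a b s : dual gT) :
  \sum_(x | x != c) ((dmul (i x) s == a) && (dmul (dmul (i x) (dinv x)) s == b))%:R
  = (oplus c i (Some a) (Some b) == Some s)%:R :> algC.
Proof.
rewrite (eq_bigr (fun x => ((x == dmul a (dinv b)) && (oplus c i (Some a) (Some b) == Some s))%:R)); last by move=> x xc; rewrite (pt i a b s xc).
case P: (oplus c i (Some a) (Some b) == Some s); last first.
  by rewrite big1 // => x _; rewrite andbF.
have wc : dmul a (dinv b) != c.
  move: P; rewrite /oplus; case: ifP => // H _; apply: contraFN H => /eqP <-.
  by apply/eqP; dext; field; rewrite ?dual_neq0.
rewrite (bigD1 (dmul a (dinv b))) //= eqxx big1 ?addr0 // => x /andP[_ /negbTE ->].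
by [].
Qed.

Lemma alg_lemma (R : comRingType) (J1 J2 J3 J4 da db dg dab dbc : R) :
  da*J2 = da*J4 -> dg*J1 = dg*J3 -> db*J2 = db*J3 -> da*dab = da*db ->
  db*dab = da*db -> dbc*db = db*dg -> dbc*dg = db*dg ->
  (- da - db + J1) * (- dab - dg + J2) = (- da - dbc + J3) * (- db - dg + J4) ->
  J1*J2 - dab*J1 + da*db = J3*J4 - dbc*J4 + db*dg.
Proof.
move=> e1 e2 e3 e4 e5 e6 e7 B.
apply/eqP; rewrite -subr_eq0.
have -> : J1*J2 - dab*J1 + da*db - (J3*J4 - dbc*J4 + db*dg) =
  ((- da - db + J1) * (- dab - dg + J2) - (- da - dbc + J3) * (- db - dg + J4))
  - ((dg*J3 - dg*J1) + (da*J4 - da*J2) + (db*J3 - db*J2) + (da*dab - da*db)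
     + (db*dab - da*db) + (db*dg - dbc*db) + (db*dg - dbc*dg)) by ring.
by rewrite B e1 e2 e3 e4 e5 e6 e7 !subrr !addr0 subrr.
Qed.

Definition Lf (gT : finGroupType) (J : gT -> gT -> algC) (a b g : gT) : algC :=
  J a b * J (a*b)%g g - kdelta (a*b)%g * J a b + kdelta a * kdelta b.

Lemma Lsym (gT : finGroupType) (M_abelian : abelian [set: gT]) (J : gT -> gT -> algC) :
  jacobi_function J -> forall a b g, Lf J a b g = Lf J g b a.
Proof.
case=> Js Jb _ a b g.
have cm : forall x y : gT, (x * y = y * x)%g.
  by move=> x y; apply: (centsP M_abelian); rewrite inE.
rewrite /Lf.
have := Jb a b g; rewrite /Jstar => B.
have kd x : kdelta x = (x == 1%g)%:R by [].
have -> : J a b * J (a * b)%g g - kdelta (a * b)%g * J a b + kdelta a * kdelta b =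
   J a (b*g)%g * J b g - kdelta (b*g)%g * J b g + kdelta b * kdelta g.
  apply: alg_lemma B; rewrite /kdelta.
  - by case: eqP => [->|_]; rewrite ?mul1g ?mul0r.
  - by case: eqP => [->|_]; rewrite ?mulg1 ?mul0r.
  - by case: eqP => [->|_]; rewrite ?mulg1 ?mul1g ?mul0r.
  - by case: eqP => [->|_]; rewrite ?mul1g ?mul0r.
  - by case: eqP => [->|_]; rewrite ?mulg1 ?mul0r ?mul1r ?mulr1 ?mulr0.
  - by case: (eqVneq b 1%g) => [->|nb]; rewrite ?mul1g ?mul0r ?mulr0 ?mulr1 ?mul1r // (negbTE nb) mul0r.
  - by case: (eqVneq g 1%g) => [->|nb]; rewrite ?mulg1 ?mul0r ?mulr0 ?mulr1 ?mul1r // (negbTE nb) mulr0.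
by rewrite Js (Js b g) (cm b g) mulrC (mulrC (kdelta b)).
Qed.

Lemma triple (gT : finGroupType) (K : algC) (f g h : gT -> algC) :
  \sum_a \sum_b \sum_c K * f a * g b * h c = K * (\sum_a f a) * (\sum_b g b) * (\sum_c h c).
Proof.
transitivity (\sum_a K * f a * (\sum_b g b * (\sum_c h c))).
  apply: eq_bigr => a _; rewrite mulr_sumr; apply: eq_bigr => b _.
  rewrite mulr_sumr mulr_sumr; apply: eq_bigr => c _; ring.
by rewrite -mulr_suml -mulr_sumr -mulr_suml mulrA.
Qed.

Lemma ex3 (gT : finGroupType) (D : finType) (P : pred D) (F : gT -> gT -> gT -> D -> algC) :
  \sum_a \sum_b \sum_c \sum_(x | P x) F a b c x = \sum_(x | P x) \sum_a \sum_b \sum_c F a b c x.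
Proof.
under eq_bigr => a _ do under eq_bigr => b _ do rewrite exchange_big.
under eq_bigr => a _ do rewrite exchange_big.
by rewrite exchange_big.
Qed.

Lemma swap13 (gT : finGroupType) (F : gT -> gT -> gT -> algC) :
  \sum_a \sum_b \sum_c F a b c = \sum_c \sum_b \sum_a F a b c.
Proof.
under eq_bigr => a _ do rewrite exchange_big.
rewrite exchange_big; apply: eq_bigr => c _.
by rewrite exchange_big.
Qed.

Lemma sum_kdelta (gT : finGroupType) (F : gT -> algC) :
  \sum_a kdelta a * F a = F 1%g.
Proof.
rewrite (bigD1 1%g) //= big1 ?addr0 /kdelta ?eqxx ?mul1r // => a /negbTE ->.
by rewrite mul0r.
Qed.

Lemma sum_kdelta2 (gT : finGroupType) (a : gT) (F : gT -> algC) :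
  \sum_b kdelta (a * b)%g * F b = F a^-1%g.
Proof.
rewrite (bigD1 a^-1%g) //= big1 ?addr0 /kdelta ?mulgV ?eqxx ?mul1r // => b nb.
case: eqP => [e|_]; last by rewrite mul0r.
by move: nb; rewrite -(mulKg a b) e mulg1 eqxx.
Qed.

Lemma dual_invg (gT : finGroupType) (x : dual gT) a : x a^-1%g = (x a)^-1.
Proof.
apply: (mulfI (dual_neq0 x a)); rewrite -dualM mulgV dual1 mulfV //.
exact: dual_neq0.
Qed.

Lemma natb_mul (b1 b2 : bool) : (b1%:R * b2%:R : algC) = (b1 && b2)%:R.
Proof. by case: b1; case: b2; rewrite ?mul1r ?mul0r. Qed.

Lemma mneq0 (gT : finGroupType) : (#|gT|%:R : algC) != 0.
Proof. by rewrite pnatr_eq0 -lt0n; exact: dual_card_gt0. Qed.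

Definition Phi (gT : finGroupType) (J : gT -> gT -> algC) (x0 y0 z0 : dual gT) : algC :=
  \sum_a \sum_b \sum_g Lf J a b g * (x0 a)^-1 * (y0 b)^-1 * (z0 g)^-1.

Lemma A3val (gT : finGroupType) (x0 y0 z0 : dual gT) :
  \sum_a \sum_b \sum_(g : gT) kdelta a * kdelta b * (x0 a)^-1 * (y0 b)^-1 * (z0 g)^-1
  = (dual_one gT == z0)%:R * #|gT|%:R.
Proof.
transitivity (\sum_a \sum_b \sum_(g : gT) 1 * (kdelta a * (x0 a)^-1) * (kdelta b * (y0 b)^-1) * (dual_one gT g * (z0 g)^-1)).
  by do 3!(apply: eq_bigr => ? _); rewrite doneE; ring.
by rewrite triple !sum_kdelta !dual1 invr1 !mul1r orth.
Qed.

Lemma A2val (gT : finGroupType) (J : gT -> gT -> algC) (c : dual gT) (i : dual gT -> dual gT)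
  (HJ : forall a b : gT,
     J a b = (#|gT|%:R)^-1 *
             \sum_(x : dual gT | x != c) i x a * dmul (i x) (dinv x) b)
  (x0 y0 z0 : dual gT) :
  \sum_a \sum_b \sum_(g : gT) kdelta (a*b)%g * J a b * (x0 a)^-1 * (y0 b)^-1 * (z0 g)^-1
  = (dual_one gT == z0)%:R * (#|gT|%:R *
    \sum_(x | x != c) (dmul (i x) y0 == dmul (dmul (i x) (dinv x)) x0)%:R).
Proof.
set Zs := \sum_(g : gT) dual_one gT g * (z0 g)^-1.
transitivity (\sum_a (\sum_b kdelta (a*b)%g * (J a b * (x0 a)^-1 * (y0 b)^-1)) * Zs).
  apply: eq_bigr => a _; rewrite mulr_suml; apply: eq_bigr => b _.
  rewrite mulr_sumr; apply: eq_bigr => g _; rewrite doneE; ring.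
under eq_bigr => a _ do rewrite sum_kdelta2 HJ.
transitivity (Zs * \sum_a \sum_(x | x != c) (#|gT|%:R^-1 * (dmul (i x) y0 a * (dmul (dmul (i x) (dinv x)) x0 a)^-1))).
  rewrite mulr_sumr; apply: eq_bigr => a _; rewrite mulrC; congr (_ * _).
  rewrite -!mulrA mulr_suml mulr_sumr; apply: eq_bigr => x _.
  rewrite !dual_invg invrK !dmulE !dinvE; field; rewrite ?dual_neq0 ?mneq0 //.
rewrite exchange_big /Zs orth -mulrA; congr (_ * (_ * _)).
apply: eq_bigr => x xc; rewrite -mulr_sumr.
by rewrite orth mulrCA mulVf ?mneq0 // mulr1.
Qed.

Lemma A1val (gT : finGroupType) (J : gT -> gT -> algC) (c : dual gT) (i : dual gT -> dual gT)
  (HJ : forall a b : gT,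
     J a b = (#|gT|%:R)^-1 *
             \sum_(x : dual gT | x != c) i x a * dmul (i x) (dinv x) b)
  (x0 y0 z0 : dual gT) :
  \sum_a \sum_b \sum_(g : gT) J a b * J (a*b)%g g * (x0 a)^-1 * (y0 b)^-1 * (z0 g)^-1
  = #|gT|%:R * \sum_(x | x != c) \sum_(y | y != c)
      ((dmul (i x) (i y) == x0)%:R * (dmul (dmul (i x) (dinv x)) (i y) == y0)%:R
        * (dmul (i y) (dinv y) == z0)%:R).
Proof.
set m := (#|gT|%:R : algC).
have hlp : forall K S1 S2 X Y Z : algC, K*S1*(K*S2)*X*Y*Z = (K*K*(X*Y*Z))*(S1*S2).
  by move=> *; ring.
transitivity (\sum_a \sum_b \sum_(g : gT) \sum_(x | x != c) \sum_(y | y != c)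
   (m^-1 * m^-1) * (dmul (i x) (i y) a * (x0 a)^-1) *
   (dmul (dmul (i x) (dinv x)) (i y) b * (y0 b)^-1) *
   (dmul (i y) (dinv y) g * (z0 g)^-1)).
  do 3!(apply: eq_bigr => ? _).
  rewrite !HJ hlp mulr_suml mulr_sumr; apply: eq_bigr => x _.
  rewrite mulr_sumr mulr_sumr; apply: eq_bigr => y _.
  rewrite dualM !dmulE; ring.
rewrite ex3 mulr_sumr; apply: eq_bigr => x _.
rewrite ex3 mulr_sumr; apply: eq_bigr => y _.
rewrite triple !orth; field; exact: mneq0.
Qed.

Lemma dmul1 (gT : finGroupType) (x : dual gT) : dmul x (dual_one gT) = x.
Proof. by dext; rewrite mulr1. Qed.

Lemma S2val (gT : finGroupType) (c : dual gT) (i : dual gT -> dual gT) (x0 y0 : dual gT) :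
  \sum_(x | x != c) (dmul (i x) y0 == dmul (dmul (i x) (dinv x)) x0)%:R
  = (oplus c i (Some x0) (Some y0) != None)%:R :> algC.
Proof.
set w := dmul x0 (dinv y0).
have pw : forall x, (dmul (i x) y0 == dmul (dmul (i x) (dinv x)) x0) = (x == w).
  move=> x; apply/eqP/eqP => [H|->].
    apply/dual_eqP => a; move: (dapp a H); rewrite /w !(dmulE, dinvE) => H'.
    have e0 : x0 a = y0 a * x a.
      transitivity ((i x a * (x a)^-1 * x0 a) * x a / i x a).
        by field; rewrite ?dual_neq0.
      by rewrite -H'; field; rewrite ?dual_neq0.
    by rewrite e0; field; rewrite ?dual_neq0.
  by dext; field; rewrite ?dual_neq0.
under eq_bigr => x _ do rewrite pw.
have ew : (w == c) = (x0 == dmul c y0).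
  rewrite /w; apply/eqP/eqP => [H|->]; last by dext; field; rewrite ?dual_neq0.
  by rewrite -H; dext; field; rewrite ?dual_neq0.
rewrite /oplus -ew; case: (eqVneq w c) => [e|ne] /=.
  by rewrite big1 // => x xc; rewrite e (negbTE xc).
by rewrite (bigD1 w) //= eqxx big1 ?addr0 // => x /andP[_ /negbTE ->].
Qed.

Lemma S1val (gT : finGroupType) (c : dual gT) (i : dual gT -> dual gT) (x0 y0 z0 : dual gT) :
  \sum_(x | x != c) \sum_(y | y != c)
      ((dmul (i x) (i y) == x0)%:R * (dmul (dmul (i x) (dinv x)) (i y) == y0)%:R
        * (dmul (i y) (dinv y) == z0)%:R)
  = (if oplus c i (Some x0) (Some y0) is Some s then
       (oplus c i (Some s) (Some z0) == Some (dual_one gT))%:R else 0) :> algC.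
Proof.
rewrite exchange_big.
under eq_bigr => y _ do rewrite -mulr_suml.
under eq_bigr => y _ do under eq_bigr => x _ do rewrite natb_mul.
under eq_bigr => y _ do rewrite (Ucount c i x0 y0 (i y)).
case: (oplus c i (Some x0) (Some y0)) => [s|]; last by rewrite big1 // => y _; rewrite mul0r.
rewrite -(Ucount c i s z0 (dual_one gT)); apply: eq_bigr => y _.
by rewrite natb_mul !dmul1 (inj_eq (@Some_inj _)) eq_sym andbC.
Qed.

Lemma Phi_val (gT : finGroupType) (J : gT -> gT -> algC) (c : dual gT) (i : dual gT -> dual gT)
  (HJ : forall a b : gT,
     J a b = (#|gT|%:R)^-1 *
             \sum_(x : dual gT | x != c) i x a * dmul (i x) (dinv x) b)
  (x0 y0 z0 : dual gT) :
  Phi J x0 y0 z0 = #|gT|%:R *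
    (oplus c i (oplus c i (Some x0) (Some y0)) (Some z0) == Some (dual_one gT))%:R.
Proof.
have E : Phi J x0 y0 z0 =
  \sum_a \sum_b \sum_(g : gT) J a b * J (a*b)%g g * (x0 a)^-1 * (y0 b)^-1 * (z0 g)^-1
  - \sum_a \sum_b \sum_(g : gT) kdelta (a*b)%g * J a b * (x0 a)^-1 * (y0 b)^-1 * (z0 g)^-1
  + \sum_a \sum_b \sum_(g : gT) kdelta a * kdelta b * (x0 a)^-1 * (y0 b)^-1 * (z0 g)^-1.
  rewrite /Phi -sumrB -big_split; apply: eq_bigr => a _.
  rewrite -sumrB -big_split; apply: eq_bigr => b _.
  rewrite -sumrB -big_split; apply: eq_bigr => g _ /=.
  rewrite /Lf; ring.
rewrite E (A1val HJ) (A2val HJ) A3val S1val S2val.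
case: (oplus c i (Some x0) (Some y0)) => [s|] /=.
  by rewrite mulr1; ring.
by rewrite (inj_eq (@Some_inj _)) eq_sym mulr0 mulr0; ring.
Qed.

Lemma oplus_None_r (gT : finGroupType) (c : dual gT) i u : oplus c i u None = u.
Proof. by case: u. Qed.

Lemma oplus_commo (gT : finGroupType) (c : dual gT) i
  (Hc : dmul c c = dual_one gT)
  (Hi : forall x, x != c -> i x = dmul x (i (dinv x))) u v :
  oplus c i u v = oplus c i v u.
Proof.
case: u => [x|]; case: v => [y|] //=; exact: oplus_comm.
Qed.

Lemma oplus_scale_opt (gT : finGroupType) (c : dual gT) i s u v :
  oplus c i (omap (dmul s) u) (omap (dmul s) v) = omap (dmul s) (oplus c i u v).
Proof.
case: u => [x|]; case: v => [y|] //=; exact: oplus_scale.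
Qed.

Unset Implicit Arguments. Set Strict Implicit. Set Printing Implicit Defensive.

Theorem mainTheorem12 (gT : finGroupType) (M_abelian : abelian [set: gT])
    (J : gT -> gT -> algC) (c : dual gT) (i : dual gT -> dual gT) :
  jacobi_function J ->
  dmul c c = dual_one gT ->
  (* i maps \hat M \ {c} into \hat M \ {1} ... *)
  (forall x, x != c -> i x != dual_one gT) ->
  (* ... injectively ... *)
  (forall x y, x != c -> y != c -> i x = i y -> x = y) ->
  (* ... and onto \hat M \ {1} *)
  (forall y, y != dual_one gT -> exists2 x, x != c & i x = y) ->
  (forall x, x != c -> i x = dmul x (i (dinv x))) ->
  (forall a b : gT,
     J a b = (#|gT|%:R)^-1 *
             \sum_(x : dual gT | x != c) i x a * dmul (i x) (dinv x) b) ->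
  forall u v w : option (dual gT),
    oplus c i (oplus c i u v) w = oplus c i u (oplus c i v w).
Proof.
move=> HJac Hc _ _ _ Hi HJ.
have key : forall x y z : dual gT,
    (oplus c i (oplus c i (Some x) (Some y)) (Some z) == Some (dual_one gT)) =
    (oplus c i (oplus c i (Some z) (Some y)) (Some x) == Some (dual_one gT)).
  move=> x y z.
  have : Phi J x y z = Phi J z y x.
    rewrite /Phi.
    under eq_bigr => a _ do under eq_bigr => b _ do under eq_bigr => g _ do
      rewrite (Lsym M_abelian HJac a b g).
    rewrite swap13; do 3!(apply: eq_bigr => ? _); ring.
  rewrite !(Phi_val HJ) => /(mulfI (mneq0 gT)) /eqP; rewrite eqr_nat.
  by move/eqP; case: (_ == _); case: (_ == _).
have P : forall x y z w : dual gT,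
    (oplus c i (oplus c i (Some x) (Some y)) (Some z) == Some w) =
    (oplus c i (oplus c i (Some z) (Some y)) (Some x) == Some w).
  move=> x y z w.
  have sc : forall x y z : dual gT,
      (oplus c i (oplus c i (Some x) (Some y)) (Some z) == Some w) =
      (oplus c i (oplus c i (Some (dmul (dinv w) x)) (Some (dmul (dinv w) y)))
         (Some (dmul (dinv w) z)) == Some (dual_one gT)).
    move=> x1 y1 z1.
    rewrite (oplus_scale c i (dinv w) x1 y1).
    rewrite -[Some (dmul (dinv w) z1)]/(omap (dmul (dinv w)) (Some z1)).
    rewrite oplus_scale_opt.
    case: (oplus c i (oplus c i (Some x1) (Some y1)) (Some z1)) => [t|] //=.
    rewrite !(inj_eq (@Some_inj _)).
    have -> : dmul (dinv w) t = dmul t (dinv w) by dext; ring.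
    by rewrite dmul_inv_eq1.
  by rewrite !sc key.
have A : forall x y z : dual gT,
    oplus c i (oplus c i (Some x) (Some y)) (Some z) =
    oplus c i (oplus c i (Some z) (Some y)) (Some x).
  move=> x y z.
  case E: (oplus c i (oplus c i (Some x) (Some y)) (Some z)) => [t|].
    by apply/esym/eqP; rewrite -P E.
  case E2: (oplus c i (oplus c i (Some z) (Some y)) (Some x)) => [t|] //.
  by move/eqP: E2; rewrite -P E.
case=> [x|] [y|] [z|]; try by rewrite ?oplus_None_r //=.
rewrite A (oplus_commo Hc Hi _ (Some x)) (oplus_commo Hc Hi (Some z)).
by [].
Qed.
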